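(* Let $\mathcal H$ be a finite hypergraph with vertices $v_1,\dots,v_n$ and hyperedges $\lambda_1,\dots,\lambda_h$, let $L=L_K(\mathcal H)$ (a unital algebra with $1=\sum_kv_k$), and let $A,B$ be the $h\times n$ integer matrices with $A_{k\ell}=|\{i\in I_{\lambda_k}: s(\lambda_k)_i=v_\ell\}|$ and $B_{k\ell}=|\{j\in J_{\lambda_k}: r(\lambda_k)_j=v_\ell\}|$. Assume the confluence condition holds in the free commutative monoid $T$ on $\{v_1,\dots,v_n\}$. Then $L$ has Invariant Basis Number if and only if $\mathrm{rank}(B^t-A^t)<\mathrm{rank}([B^t-A^t\ \ c])$, where $c$ is the $n\times1$ column with all entries $1$ and ranks are over $\mathbb Q$.
   Context: $K$ is a field. A hypergraph $\mathcal H=(\mathcal H^0,\mathcal H^1,s,r)$: vertex set $\mathcal H^0$, hyperedge set $\mathcal H^1$, and for each hyperedge $\lambda$ nonempty index sets $I_\lambda,J_\lambda$ with families $s(\lambda)=(s(\lambda)_i)_{i\in I_\lambda}$, $r(\lambda)=(r(\lambda)_j)_{j\in J_\lambda}$ of vertices; finite means $\mathcal H^0$, $\mathcal H^1$ and all $I_\lambda,J_\lambda$ are finite. $L_K(\mathcal H)$ is the $K$-algebra generated by $\{v,\lambda_{ij},\lambda_{ij}^*\}$ subject to $uv=\delta_{u,v}u$; $s(\lambda)_i\lambda_{ij}=\lambda_{ij}=\lambda_{ij}r(\lambda)_j$, $r(\lambda)_j\lambda_{ij}^*=\lambda_{ij}^*=\lambda_{ij}^*s(\lambda)_i$; $\sum_{j\in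 J_\lambda}\lambda_{ij}\lambda_{kj}^*=\delta_{ik}s(\lambda)_i$; $\sum_{i\in I_\lambda}\lambda_{ij}^*\lambda_{ik}=\delta_{jk}r(\lambda)_j$. $\mathcal V(L)$ is the commutative monoid of Murray–von Neumann classes $[e]$ of idempotent matrices over $L$ with finitely many nonzero entries ($e\sim f$ iff $e=xy$, $f=yx$), with $[e]+[f]=[\mathrm{diag}(e,f)]$; for $x=\sum_\ell x_\ell v_\ell\in T$ write $[x]=\sum_\ell x_\ell[v_\ell]\in\mathcal V(L)$. A unital ring $L$ has Invariant Basis Number if $L^m\cong L^p$ as left modules implies $m=p$. For $k\in\{1,\dots,h\}$ let $a_k,b_k\in T$ be the $k$-th rows of $A$, $B$ (i.e. $a_k=\sum_{i\in I_{\lambda_k}}s(\lambda_k)_i$, $b_k=\sum_{j\in J_{\lambda_k}}r(\lambda_k)_j$). The partial operation $M_k$ on $T$ is defined on $x\in T$ with $x\ge a_k$ coordinatewise by $M_k(x)=x-a_k+b_k$. For a finite sequence $\sigma=(k_1,\dots,k_t)$ in $\{1,\dots,h\}$, $\Delta_\sigma(x)=M_{k_t}(\cdots M_{k_1}(x))$ when defined. The confluence condition holds in $T$ if for all $x,y\in T$: $[x]=[y]$ in $\mathcal V(L)$ if and only if there exist finite sequences $\sigma,\sigma'$ with $\Delta_\sigma(x)$ and $\Delta_{\sigma'}(y)$ defined and equal in $T$. *)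

(* Defs.v *)
From HB Require Import structures.
From mathcomp Require Import all_boot all_order all_algebra.
Set Implicit Arguments. Unset Strict Implicit. Unset Printing Implicit Defensive.
Import Order.TTheory GRing.Theory Num.Theory.
Local Open Scope ring_scope.

(* A finite hypergraph with vertices 'I_hv (v_1..v_n) and hyperedges 'I_he
   (lambda_1..lambda_h); hyperedge k has nonempty finite index sets
   I_k = 'I_(hI k), J_k = 'I_(hJ k), source family hs k and range family hr k. *)
Record hypergraph := Hypergraph {
  hv : nat;
  he : nat;
  hI : 'I_he -> nat;
  hJ : 'I_he -> nat;
  hI_gt0 : forall k, (0 < hI k)%N;
  hJ_gt0 : forall k, (0 < hJ k)%N;
  hs : forall k, 'I_(hI k) -> 'I_hv;
  hr : forall k, 'I_(hJ k) -> 'I_hv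
}.
Arguments hI : clear implicits.
Arguments hJ : clear implicits.
Arguments hs : clear implicits.
Arguments hr : clear implicits.

Section LPA.
Variables (K : fieldType) (H : hypergraph).

Definition lpa_relations (R : algType K) (v : 'I_(hv H) -> R)
  (lam : forall k, 'I_(hI H k) -> 'I_(hJ H k) -> R)
  (lams : forall k, 'I_(hI H k) -> 'I_(hJ H k) -> R) : Prop :=
  [/\ (forall u w, v u * v w = if u == w then v u else 0),
      (forall k i j, v (hs H k i) * lam k i j = lam k i j /\ lam k i j * v (hr H k j) = lam k i j),
      (forall k i j, v (hr H k j) * lams k i j = lams k i j /\ lams k i j * v (hs H k i) = lams k i j),
      (forall k (i i' : 'I_(hI H k)),
          \sum_(j < hJ H k) lam k i j * lams k i' j = if i == i' then v (hs H k i) else 0) &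
      (forall k (j j' : 'I_(hJ H k)),
          \sum_(i < hI H k) lams k i j * lam k i j' = if j == j' then v (hr H k j) else 0)].

(* (not necessarily unital) K-algebra homomorphisms *)
Definition alg_hom (R S : algType K) (f : R -> S) : Prop :=
  (forall (a : K) x y, f (a *: x + y) = a *: f x + f y) /\
  (forall x y, f (x * y) = f x * f y).

(* L, with the given elements, is the K-algebra generated by them subject to the
   relations above: it satisfies the relations and is universal for them. *)
Definition is_LPA (L : algType K) (v : 'I_(hv H) -> L)
  (lam lams : forall k, 'I_(hI H k) -> 'I_(hJ H k) -> L) : Prop :=
  lpa_relations v lam lams /\
  forall (R : algType K) (v' : 'I_(hv H) -> R)
         (lam' lams' : forall k, 'I_(hI H k) -> 'I_(hJ H k) -> R),
    lpa_relations v' lam' lams' ->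
    exists f : L -> R,
      [/\ alg_hom f, (forall u, f (v u) = v' u),
          (forall k i j, f (lam k i j) = lam' k i j),
          (forall k i j, f (lams k i j) = lams' k i j) &
          (forall g : L -> R, alg_hom g -> (forall u, g (v u) = v' u) ->
             (forall k i j, g (lam k i j) = lam' k i j) ->
             (forall k i j, g (lams k i j) = lams' k i j) ->
             forall x, g x = f x)].

Definition matA (k : 'I_(he H)) (l : 'I_(hv H)) : nat := #|[set i | hs H k i == l]|.
Definition matB (k : 'I_(he H)) (l : 'I_(hv H)) : nat := #|[set j | hr H k j == l]|.

Definition BtAt : 'M[rat]_(hv H, he H) :=
  \matrix_(l, k) ((matB k l)%:R - (matA k l)%:R).

Definition T := {ffun 'I_(hv H) -> nat}.

Definition Mop (k : 'I_(he H)) (x : T) : option T :=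
  if [forall l, (matA k l <= x l)%N]
  then Some [ffun l => (x l - matA k l + matB k l)%N] else None.

Definition Delta (sigma : seq 'I_(he H)) (x : T) : option T :=
  foldl (fun ox k => obind (Mop k) ox) (Some x) sigma.

End LPA.

(* Murray-von Neumann equivalence of idempotent matrices (finitely supported
   matrices are represented by square matrices of arbitrary finite size). *)
Definition mvn_equiv (L : pzRingType) (m p : nat) (e : 'M[L]_m) (f : 'M[L]_p) : Prop :=
  exists (x : 'M[L]_(m, p)) (y : 'M[L]_(p, m)), e = x *m y /\ f = y *m x.

Definition diag_seq (L : pzRingType) (s : seq L) : 'M[L]_(size s) :=
  diag_mx (\row_(i < size s) s`_i).

(* For x in T, [x] = sum_l x_l [v_l] is the class of the block-diagonal matrix
   with x_l copies of v_l (for l = 1..n in order); we record the list of entries. *)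
Definition cls_seq (K : fieldType) (H : hypergraph) (L : algType K)
  (v : 'I_(hv H) -> L) (x : T H) : seq L :=
  flatten [seq nseq (x l) (v l) | l <- enum 'I_(hv H)].

Definition V_eq (K : fieldType) (H : hypergraph) (L : algType K)
  (v : 'I_(hv H) -> L) (x y : T H) : Prop :=
  mvn_equiv (diag_seq (cls_seq v x)) (diag_seq (cls_seq v y)).

Definition confluent (K : fieldType) (H : hypergraph) (L : algType K)
  (v : 'I_(hv H) -> L) : Prop :=
  forall x y : T H, V_eq v x y <->
    exists (sigma sigma' : seq 'I_(he H)) (z : T H),
      Delta sigma x = Some z /\ Delta sigma' y = Some z.

Definition IBN (L : pzRingType) : Prop :=
  forall m p : nat,
    (exists f : 'rV[L]_m -> 'rV[L]_p,
        (forall (a : L) u w, f (a *: u + w) = a *: f u + f w) /\ bijective f) ->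
    m = p.

(* Main.v *)
Require Import Defs.
From HB Require Import structures.
From mathcomp Require Import all_boot all_order all_algebra zify ring lra.
Set Implicit Arguments. Unset Strict Implicit. Unset Printing Implicit Defensive.
Import Order.TTheory GRing.Theory Num.Theory.
Local Open Scope ring_scope.

Set Implicit Arguments.


Section M2.
Variables (K : fieldType) (L : algType K).
Definition M2 := 'M[L]_2.
HB.instance Definition _ := GRing.NzRing.on M2.
Definition sc2 (a : K) (A : M2) : M2 := map_mx (fun x => a *: x) A.
Lemma sc2A a b v : sc2 a (sc2 b v) = sc2 (a * b) v.
Proof. by apply/matrixP=> i j; rewrite !mxE scalerA. Qed.
Lemma sc21 : left_id 1 sc2.
Proof. by move=> v; apply/matrixP=> i j; rewrite !mxE scale1r. Qed.
Lemma sc2Dr : right_distributive sc2 +%R.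
Proof. by move=> a u v; apply/matrixP=> i j; rewrite !mxE scalerDr. Qed.
Lemma sc2Dl v : {morph sc2^~ v: a b / a + b}.
Proof. by move=> a b; apply/matrixP=> i j; rewrite !mxE scalerDl. Qed.
HB.instance Definition _ := GRing.Zmodule_isLmodule.Build K M2 sc2A sc21 sc2Dr sc2Dl.
Lemma sc2Al (a : K) (u v : M2) : a *: (u * v) = (a *: u) * v.
Proof. apply/matrixP=> i j; rewrite /GRing.scale /= /sc2 !mxE.
rewrite scaler_sumr; apply: eq_bigr => k _; by rewrite mxE scalerAl. Qed.
HB.instance Definition _ := GRing.Lmodule_isLalgebra.Build K M2 sc2Al.
Lemma sc2Ar (a : K) (u v : M2) : a *: (u * v) = u * (a *: v).
Proof. apply/matrixP=> i j; rewrite /GRing.scale /= /sc2 !mxE.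
rewrite scaler_sumr; apply: eq_bigr => k _; by rewrite mxE scalerAr. Qed.
HB.instance Definition _ := GRing.Lalgebra_isAlgebra.Build K M2 sc2Ar.

Lemma mulmx_scalr (m n : nat) (A : 'M[L]_(m, n)) b i j : (A *m b%:M) i j = A i j * b.
Proof.
rewrite mxE (bigD1 j) //= big1 => [|k /negPf nk]; first by rewrite !mxE eqxx mulr1n addr0.
by rewrite !mxE nk mulr0n mulr0.
Qed.
Lemma mulmx_scall (m n : nat) (A : 'M[L]_(m, n)) b i j : (b%:M *m A) i j = b * A i j.
Proof.
rewrite mxE (bigD1 i) //= big1 => [|k /negPf nk]; first by rewrite !mxE eqxx mulr1n addr0.
by rewrite !mxE eq_sym nk mulr0n mul0r.
Qed.

Lemma big_ord2 (R : nmodType) (F : 'I_2 -> R) : \sum_(k < 2) F k = F ord0 + F (@Ordinal 2 1 isT).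
Proof. by rewrite big_ord_recr big_ord1; congr (F _ + F _); apply: val_inj. Qed.

Lemma alg_hom0 (R S : algType K) (f : R -> S) : alg_hom f -> f 0 = 0.
Proof.
case=> lin _; have h := lin 1 0 0.
rewrite scale1r addr0 scale1r in h.
by apply: (@addrI _ (f 0)); rewrite addr0 [RHS]h.
Qed.
Lemma alg_homD (R S : algType K) (f : R -> S) : alg_hom f -> forall x y, f (x + y) = f x + f y.
Proof. case=> lin _ x y; have h := lin 1 x y; by rewrite !scale1r in h. Qed.
Lemma alg_hom_sum (R S : algType K) (f : R -> S) (I : finType) (F : I -> R) :
  alg_hom f -> f (\sum_i F i) = \sum_i f (F i).
Proof.
move=> hf; apply: (big_morph f (alg_homD hf) (alg_hom0 hf)).
Qed.

End M2.

Unset Implicit Arguments.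
Section A.
Variables (K : fieldType) (H : hypergraph) (L : algType K)
  (v : 'I_(hv H) -> L) (lam lams : forall k, 'I_(hI H k) -> 'I_(hJ H k) -> L).

Lemma rel_hom (R : algType K) (f : L -> R) : alg_hom f -> lpa_relations v lam lams ->
  lpa_relations (fun u => f (v u)) (fun k i j => f (lam k i j)) (fun k i j => f (lams k i j)).
Proof.
move=> hf [r1 r2 r3 r4 r5]; have hm := hf.2.
split.
- by move=> u w; rewrite -hm r1; case: eqP => //; rewrite alg_hom0.
- by move=> k i j; case: (r2 k i j) => a b; rewrite -!hm a b.
- by move=> k i j; case: (r3 k i j) => a b; rewrite -!hm a b.
- move=> k i i'; rewrite -(eq_bigr _ (fun j _ => hm _ _)) -alg_hom_sum // r4.
  by case: eqP => //; rewrite alg_hom0.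
- move=> k j j'; rewrite -(eq_bigr _ (fun i _ => hm _ _)) -alg_hom_sum // r5.
  by case: eqP => //; rewrite alg_hom0.
Qed.

Lemma uniq_hom (R : algType K) (g1 g2 : L -> R) : is_LPA v lam lams ->
  alg_hom g1 -> alg_hom g2 -> (forall u, g1 (v u) = g2 (v u)) ->
  (forall k i j, g1 (lam k i j) = g2 (lam k i j)) ->
  (forall k i j, g1 (lams k i j) = g2 (lams k i j)) -> forall x, g1 x = g2 x.
Proof.
move=> [rel univ] h1 h2 ev el els x.
have [f [_ _ _ _ U]] := univ R _ _ _ (rel_hom R g1 h1 rel).
rewrite (U g1) // (U g2) //.
Qed.

Definition esum := \sum_l v l.

Lemma one_esum : is_LPA v lam lams -> 1 = esum.
Proof.
move=> hL; have [[r1 r2 r3 r4 r5] _] := hL.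
have ev u : esum * v u = v u.
  rewrite /esum mulr_suml (bigD1 u) //= r1 eqxx big1 ?addr0 // => w /negPf nw.
  by rewrite r1 nw.
have ve u : v u * esum = v u.
  rewrite /esum mulr_sumr (bigD1 u) //= r1 eqxx big1 ?addr0 // => w /negPf nw.
  by rewrite r1 eq_sym nw.
have ee : esum * esum = esum by rewrite {2}/esum mulr_sumr; apply: eq_bigr => u _; rewrite ev.
have el k i j : esum * lam k i j = lam k i j /\ lam k i j * esum = lam k i j.
  case: (r2 k i j) => a b; split; first by rewrite -a mulrA ev.
  by rewrite -b -mulrA ve.
have els k i j : esum * lams k i j = lams k i j /\ lams k i j * esum = lams k i j.
  case: (r3 k i j) => a b; split; first by rewrite -a mulrA ev.
  by rewrite -b -mulrA ve.
set e := esum in ev ve ee el els *.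
pose U : M2 L := \matrix_(i, j) (if i == j then e else 1 - e).
have UU : U * U = 1.
  apply/matrixP=> i j; rewrite [U * U]/GRing.mul /= mxE big_ord2 !mxE.
  have e1 : e * (1 - e) = 0 by rewrite mulrBr mulr1 ee subrr.
  have e2 : (1 - e) * e = 0 by rewrite mulrBl mul1r ee subrr.
  have e3 : (1 - e) * (1 - e) = 1 - e by rewrite mulrBr mulr1 e2 subr0.
  case: i => [[|[|//]] ?]; case: j => [[|[|//]] ?] /=; rewrite ?e1 ?e2 ?e3 ?ee.
  - by rewrite addrC subrK.
  - by rewrite addr0.
  - by rewrite addr0.
  - by rewrite subrK.
pose p1 := fun x : L => (x%:M : M2 L).
pose p2 := fun x : L => U * p1 x * U.
have hp1 : alg_hom p1.
  split => [a x y|x y]; last by rewrite /p1 scalar_mxM.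
  apply/matrixP => i j; rewrite /p1 /GRing.scale /= /sc2 !mxE.
  by case: eqP => _; rewrite ?mulr1n ?mulr0n ?scaler0 ?addr0.
have hp2 : alg_hom p2.
  split => [a x y|x y].
    by rewrite /p2 (hp1.1) mulrDr mulrDl -scalerAr -scalerAl.
  by rewrite /p2 hp1.2 !mulrA -[U * p1 x * U * U]mulrA UU mulr1.
have fix1 g : e * g = g -> g * e = g -> p1 g = p2 g.
  move=> eg ge; rewrite /p2.
  have h1 : U * p1 g = p1 g.
    apply/matrixP=> i j; rewrite /p1 [U * _]/GRing.mul /= mulmx_scalr !mxE.
    by case: eqP => _; rewrite ?mulr1n ?mulr0n // mulrBl mul1r eg subrr.
  have h2 : p1 g * U = p1 g.
    apply/matrixP=> i j; rewrite /p1 [_ * U]/GRing.mul /= mulmx_scall !mxE.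
    by case: eqP => _; rewrite ?mulr1n ?mulr0n // mulrBr mulr1 ge subrr.
  by rewrite h1 h2.
have P12 := uniq_hom _ _ _ hL hp1 hp2 (fun u => fix1 _ (ev u) (ve u))
   (fun k i j => fix1 _ (el k i j).1 (el k i j).2)
   (fun k i j => fix1 _ (els k i j).1 (els k i j).2).
have off x : e * x * (1 - e) + (1 - e) * x * e = 0.
  have := congr1 (fun M : M2 L => M 0 1) (P12 x).
  rewrite /p2 /p1 [_ * U]/GRing.mul /= mxE [X in _ = X]mxE big_ord2.
  rewrite -[U * _]/(U *m _) !mulmx_scalr !mxE /=.
  by rewrite !mulr0n => <-.
have exf x : e * x * (1 - e) = 0.
  have ef0 : e * (1 - e) = 0 by rewrite mulrBr mulr1 ee subrr.
  have := congr1 (fun y => e * y) (off x).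
  by rewrite /= mulr0 mulrDr !mulrA ee ef0 !mul0r addr0.
have fxe x : (1 - e) * x * e = 0 by have := off x; rewrite exf add0r.
have xe x : x * e = e * x * e by move: (fxe x); rewrite mulrBl mul1r mulrBl => /eqP; rewrite subr_eq0 => /eqP.
have ex x : e * x = e * x * e by move: (exf x); rewrite mulrBr mulr1 => /eqP; rewrite subr_eq0 => /eqP.
pose p3 := fun x : L => e * x * e.
have hp3 : alg_hom p3.
  split => [a x y|x y]; first by rewrite /p3 mulrDr mulrDl -scalerAr -scalerAl.
  by rewrite /p3 -(xe y) -(ex x) !mulrA.
have fix3 g : e * g = g -> g * e = g -> p3 g = g by move=> a b; rewrite /p3 a b.
have := uniq_hom L p3 id hL hp3 _ (fun u => fix3 _ (ev u) (ve u))
   (fun k i j => fix3 _ (el k i j).1 (el k i j).2)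
   (fun k i j => fix3 _ (els k i j).1 (els k i j).2) 1.
rewrite /p3 mulr1 ee => <- //.
Qed.
End A.

Set Implicit Arguments.


Lemma mvn_sym (L : pzRingType) m p (e : 'M[L]_m) (f : 'M[L]_p) : mvn_equiv e f -> mvn_equiv f e.
Proof. by case=> x [y [h1 h2]]; exists y, x. Qed.

Lemma mvn_trans (L : pzRingType) m p q (e : 'M[L]_m) (f : 'M[L]_p) (g : 'M[L]_q) :
  e *m e = e -> g *m g = g -> mvn_equiv e f -> mvn_equiv f g -> mvn_equiv e g.
Proof.
move=> ee gg [x1 [y1 [E1 F1]]] [x2 [y2 [F2 G2]]]; exists (x1 *m x2), (y2 *m y1); split.
  by rewrite mulmxA -(mulmxA x1) -F2 F1 mulmxA -E1 -mulmxA -E1 ee.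
by rewrite mulmxA -(mulmxA y2) -F1 F2 mulmxA -G2 -mulmxA -G2 gg.
Qed.

Lemma eq1_rows (L : pzRingType) m (A : 'M[L]_m) : (forall u : 'rV_m, u *m A = u) -> A = 1%:M.
Proof. by move=> h; apply/row_matrixP=> i; rewrite row1 rowE h. Qed.

Lemma lin_mx (L : pzRingType) m p (f : 'rV[L]_m -> 'rV[L]_p) :
  (forall (a : L) u w, f (a *: u + w) = a *: f u + f w) ->
  exists X : 'M[L]_(m, p), forall u, f u = u *m X.
Proof.
move=> lin.
have f0 : f 0 = 0.
  have h := lin 1 0 0; rewrite scale1r addr0 scale1r in h.
  by apply: (@addrI _ (f 0)); rewrite addr0 [RHS]h.
have fD x y : f (x + y) = f x + f y by have h := lin 1 x y; rewrite !scale1r in h.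
have fZ a x : f (a *: x) = a *: f x by have h := lin a x 0; rewrite !addr0 f0 addr0 in h.
exists (\matrix_(i, j) f (delta_mx 0 i) 0 j) => u.
rewrite {1}(matrix_sum_delta u) big_ord1.
rewrite (big_morph f fD f0).
apply/matrixP=> i j; rewrite summxE mxE; apply: eq_bigr => k _.
by rewrite fZ !mxE (ord1 i).
Qed.

Lemma IBN_mvn (L : pzRingType) :
  IBN L <-> (forall m p, mvn_equiv (1%:M : 'M[L]_m) (1%:M : 'M[L]_p) -> m = p).
Proof.
split=> h m p.
  case=> X [Y [E1 E2]]; apply: h; exists (fun u => u *m X); split.
    by move=> a u w; rewrite mulmxDl scalemxAl.
  exists (fun w => w *m Y) => u; by rewrite -mulmxA -?E1 -?E2 mulmx1.
case=> f [lin [g fg gf]]; apply: h.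
have ling : forall (a : L) u w, g (a *: u + w) = a *: g u + g w.
  move=> a u w; apply: (can_inj fg); by rewrite lin !gf.
have [X hX] := lin_mx lin; have [Y hY] := lin_mx ling.
exists X, Y; split; apply/esym/eq1_rows => u; rewrite mulmxA -?hX -?hY ?fg ?gf //.
Qed.

Set Implicit Arguments.


Lemma nth_flatten_const (T : Type) (x0 : T) (ss : seq (seq T)) m a r :
  all (fun s => size s == m) ss -> (a < size ss)%N -> (r < m)%N ->
  nth x0 (flatten ss) (a * m + r) = nth x0 (nth [::] ss a) r.
Proof.
elim: ss a => [//|s ss IH] [|a] /= /andP[/eqP hs hall] ha hr.
  by rewrite nth_cat hs hr.
rewrite nth_cat hs ifF; last by apply/negbTE; rewrite -leqNgt; nia.
have -> : (a.+1 * m + r - m = a * m + r)%N by rewrite mulSn; lia.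
exact: IH.
Qed.

Lemma div_lt (j n m : nat) : (j < n * m)%N -> (j %/ m < n)%N.
Proof.
case: m => [|m]; first by rewrite muln0.
by move=> h; rewrite ltn_divLR.
Qed.

Unset Implicit Arguments.
Section Cls.
Variables (K : fieldType) (H : hypergraph) (L : algType K) (v : 'I_(hv H) -> L).
Hypothesis r1 : forall u w, v u * v w = if u == w then v u else 0.
Hypothesis e1 : 1 = \sum_l v l.
Variable m : nat.

Let n := hv H.
Let s := cls_seq v [ffun _ => m].

Lemma size_s : size s = (n * m)%N.
Proof.
rewrite /s /cls_seq size_flatten /shape -map_comp.
rewrite (eq_map (g := fun _ => m)); last by move=> l; rewrite /= ffunE size_nseq.
have -> : forall (T : Type) (t : seq T), [seq m | _ <- t] = nseq (size t) m.
  by move=> T; elim=> //= a t ->.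
by rewrite sumn_nseq size_enum_ord mulnC.
Qed.

Definition lo (j : 'I_(size s)) : 'I_n :=
  Ordinal (div_lt (leq_trans (ltn_ord j) (eq_leq size_s))).

Lemma m_gt0 (j : 'I_(size s)) : (0 < m)%N.
Proof. have := leq_trans (ltn_ord j) (eq_leq size_s); case: (m) => //; by rewrite muln0. Qed.

Lemma nth_s (j : 'I_(size s)) : s`_j = v (lo j).
Proof.
have m0 := m_gt0 j.
rewrite {1}(divn_eq j m) /s /cls_seq nth_flatten_const.
  rewrite (nth_map (lo j)) ?size_enum_ord; last exact: (div_lt (leq_trans (ltn_ord j) (eq_leq size_s))).
  rewrite nth_nseq ffunE ltn_pmod //.
  congr v; apply: val_inj => /=.
  by rewrite nth_enum_ord //; exact: (div_lt (leq_trans (ltn_ord j) (eq_leq size_s))).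
- by apply/allP => t /mapP [l _ ->]; rewrite size_nseq ffunE.
- by rewrite size_map size_enum_ord; exact: (div_lt (leq_trans (ltn_ord j) (eq_leq size_s))).
- by rewrite ltn_pmod.
Qed.

Lemma lo_ro_inj (j j' : 'I_(size s)) : lo j = lo j' -> (j %% m = j' %% m)%N -> j = j'.
Proof.
move=> /(congr1 val) /= h1 h2; apply: val_inj => /=.
by rewrite (divn_eq j m) (divn_eq j' m) h1 h2.
Qed.

Definition Xm : 'M[L]_(m, size s) := \matrix_(i, j) (if (j %% m == i)%N then v (lo j) else 0).
Definition Ym : 'M[L]_(size s, m) := \matrix_(j, i) (if (j %% m == i)%N then v (lo j) else 0).

Lemma vv u : v u * v u = v u.
Proof. by rewrite r1 eqxx. Qed.

Lemma XY : 1%:M = Xm *m Ym.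
Proof.
apply/matrixP => i i'; rewrite !mxE.
case: (eqVneq i i') => [<-|ne].
  rewrite mulr1n.
  rewrite (eq_bigr (fun j : 'I_(size s) => if (j %% m == i)%N then v (lo j) else 0)); last first.
    by move=> j _; rewrite !mxE; case: ifP; rewrite ?vv ?mul0r.
  rewrite -big_mkcond /= e1.
  rewrite (partition_big lo xpredT) //=; apply: eq_bigr => l _.
  have hl : (l * m + i < size s)%N by rewrite size_s; have := ltn_ord i; have := ltn_ord l; nia.
  rewrite (big_pred1 (Ordinal hl)) /=; last first.
    move=> j /=; apply/idP/idP.
      case/andP => /eqP h1 /eqP h2; apply/eqP/val_inj => /=.
      by rewrite (divn_eq j m) h1 -h2.
    move/eqP => -> /=.
    have m0 : (0 < m)%N := leq_ltn_trans (leq0n i) (ltn_ord i).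
    rewrite modnMDl modn_small ?ltn_ord // eqxx /=.
    apply/eqP/val_inj => /=; rewrite divnMDl // divn_small ?ltn_ord //; by rewrite addn0.
  apply: f_equal; apply: val_inj => /=.
  have m0 : (0 < m)%N := leq_ltn_trans (leq0n i) (ltn_ord i).
  rewrite divnMDl // divn_small ?ltn_ord //; by rewrite addn0.
rewrite mulr0n big1 // => j _; rewrite !mxE.
case: eqP => [h|]; last by rewrite mul0r.
by rewrite ifF ?mulr0 //; apply/negbTE; rewrite h.
Qed.

Lemma YX : diag_seq s = Ym *m Xm.
Proof.
apply/matrixP => j j'; rewrite !mxE.
have m0 := m_gt0 j.
rewrite (bigD1 (Ordinal (ltn_pmod j m0))) //= big1; last first.
  move=> i /negbTE ne; rewrite !mxE.
  have -> : (j %% m == i)%N = false.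
    by apply/negbTE; apply: contraFN ne => /eqP h; apply/eqP/val_inj.
  by rewrite mul0r.
rewrite !mxE eqxx addr0 nth_s.
case: (eqVneq j j') => [<-|ne].
  by rewrite eqxx mulr1n vv.
rewrite mulr0n; case: eqP => [h|]; last by rewrite mulr0.
rewrite r1 ifF //; apply/negbTE; apply: contra ne => /eqP hl.
by apply/eqP; apply: lo_ro_inj.
Qed.

Lemma cls_const : mvn_equiv (1%:M : 'M[L]_m) (diag_seq s).
Proof. by exists Xm, Ym; split; [exact: XY | exact: YX]. Qed.

Lemma diag_idem : diag_seq s *m diag_seq s = diag_seq s.
Proof.
rewrite /diag_seq mulmx_diag; congr diag_mx; apply/matrixP => i j.
by rewrite !mxE nth_s vv.
Qed.
End Cls.

Set Implicit Arguments.


Section Comb.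
Variable H : hypergraph.
Local Notation A := (@matA H).
Local Notation B := (@matB H).

Lemma foldl_none (s : seq 'I_(he H)) :
  foldl (fun ox k => obind (@Mop H k) ox) None s = None.
Proof. by elim: s. Qed.

Lemma Delta_eff (s : seq 'I_(he H)) (x z : T H) : Delta s x = Some z ->
  forall l, (z l + \sum_(k <- s) A k l = x l + \sum_(k <- s) B k l)%N.
Proof.
elim: s x => [|k s IH] x /=.
  by rewrite /Delta /= => [[->]] l; rewrite !big_nil.
rewrite /Delta /= /Mop; case: ifP => [/forallP hA|_]; last by rewrite foldl_none.
move=> /IH h l; have := h l; rewrite !big_cons ffunE => e.
have := hA l; lia.
Qed.

Lemma Delta_def (s : seq 'I_(he H)) (x : T H) :
  (forall l, \sum_(k <- s) A k l <= x l)%N -> exists z, Delta s x = Some z.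
Proof.
elim: s x => [|k s IH] x /=; first by exists x.
move=> hs; rewrite /Delta /= /Mop.
have hA : [forall l, (A k l <= x l)%N].
  by apply/forallP => l; have := hs l; rewrite big_cons; lia.
rewrite hA; apply: IH => l; rewrite ffunE; have := hs l; rewrite big_cons; lia.
Qed.

Lemma sum_count (s : seq 'I_(he H)) (F : 'I_(he H) -> nat) :
  (\sum_(k <- s) F k = \sum_k count_mem k s * F k)%N.
Proof.
elim: s => [|k0 s IH]; first by rewrite big_nil big1 // => k _; rewrite mul0n.
rewrite big_cons IH.
rewrite [RHS](eq_bigr (fun k => (k0 == k) * F k + count_mem k s * F k)%N); last first.
  by move=> k _; rewrite /= mulnDl.
rewrite big_split; congr (_ + _)%N.
by rewrite (bigD1 k0) //= eqxx mul1n big1 ?addn0 // => k /negPf; rewrite eq_sym => ->.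
Qed.

Definition seq_of (c : 'I_(he H) -> nat) : seq 'I_(he H) :=
  flatten [seq nseq (c k) k | k <- enum 'I_(he H)].

Lemma sum_seq_of c (F : 'I_(he H) -> nat) :
  (\sum_(k <- seq_of c) F k = \sum_k c k * F k)%N.
Proof.
rewrite /seq_of big_flatten /= big_map big_enum /=; apply: eq_bigr => k _.
by rewrite big_nseq iter_addn_0 mulnC.
Qed.

Definition cst (m : nat) : T H := [ffun _ => m].

Definition reach m p := exists (s s' : seq 'I_(he H)) (z : T H),
  Delta s (cst m) = Some z /\ Delta s' (cst p) = Some z.

Local Notation D := (BtAt H).
Local Notation c := (const_mx 1 : 'cV[rat]_(hv H)).

Lemma rank_sub : (\rank D < \rank (row_mx D c))%N = ~~ (c^T <= D^T)%MS.
Proof.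
rewrite -[\rank (row_mx _ _)]mxrank_tr tr_row_mx -[\rank D]mxrank_tr.
rewrite -addsmxE.
have h := mxrank_leqif_sup (addsmxSl D^T c^T).
rewrite ltn_neqAle h.2 h.1 andbT addsmx_sub submx_refl /=.
by [].
Qed.


Lemma ring4 (a b x y : rat) : (a - b) * (x - y) = (a * x + b * y) - (a * y + b * x).
Proof. ring. Qed.

Lemma reach_sub m p : reach m p -> m <> p -> (c^T <= D^T)%MS.
Proof.
case=> s [s' [z [h1 h2]]] nmp.
have e1 := Delta_eff h1; have e2 := Delta_eff h2.
have mp : (m%:R - p%:R : rat) != 0.
  by rewrite subr_eq0 eqr_nat; apply/eqP.
apply/submxP; exists (\row_k (((count_mem k s')%:R - (count_mem k s)%:R) / (m%:R - p%:R))).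
apply/matrixP => i l; rewrite !mxE.
rewrite (eq_bigr (fun k => ((count_mem k s')%:R - (count_mem k s)%:R) * ((B k l)%:R - (A k l)%:R) / (m%:R - p%:R))); last first.
  by move=> k _; rewrite !mxE mulrAC.
rewrite -mulr_suml.
have -> : \sum_k ((count_mem k s')%:R - (count_mem k s)%:R) * ((B k l)%:R - (A k l)%:R) =
   (\sum_k (count_mem k s' * B k l)%:R + \sum_k (count_mem k s * A k l)%:R) -
   (\sum_k (count_mem k s' * A k l)%:R + \sum_k (count_mem k s * B k l)%:R) :> rat.
  rewrite -[X in X - _]big_split -[X in _ - X]big_split -sumrB.
  by apply: eq_bigr => k _; rewrite !natrM ring4.
have := e1 l; have := e2 l; rewrite !(sum_count s) !(sum_count s') !ffunE.
move=> /(congr1 (fun n => n%:R : rat)); rewrite !natrD !natr_sum => f2.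
move=> /(congr1 (fun n => n%:R : rat)); rewrite !natrD !natr_sum => f1.
have -> : (\sum_k (count_mem k s' * B k l)%:R + \sum_k (count_mem k s * A k l)%:R) -
   (\sum_k (count_mem k s' * A k l)%:R + \sum_k (count_mem k s * B k l)%:R) = (m%:R - p%:R : rat).
  lra.
by rewrite divff.
Qed.


Lemma ring4z (a b x y : int) : (a - b) * (x - y) = (a * x + b * y) - (a * y + b * x).
Proof. ring. Qed.

Lemma sub_reach : (c^T <= D^T)%MS -> exists m p, m <> p /\ reach m p.
Proof.
case/submxP => w hw.
have hl l : 1 = \sum_k w 0 k * ((B k l)%:R - (A k l)%:R) :> rat.
  have := congr1 (fun M : 'M[rat]_(1, hv H) => M 0 l) hw; rewrite !mxE => h; rewrite [LHS]h.
  by apply: eq_bigr => k _; rewrite !mxE.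
pose d : int := \prod_k denq (w 0 k).
pose u k : int := numq (w 0 k) * \prod_(k' | k' != k) denq (w 0 k').
have hu k : (u k)%:~R = w 0 k * d%:~R :> rat.
  rewrite /u /d [in RHS](bigD1 k) //= !intrM numqE mulrA.
  by [].
have hd : 0 < d by apply: prodr_gt0 => k _; exact: denq_gt0.
have eqz l : d = \sum_k u k * ((B k l)%:Z - (A k l)%:Z).
  apply: (@intr_inj rat); rewrite rmorph_sum /=.
  have := congr1 (fun x => d%:~R * x) (hl l); rewrite mulr1 => ->.
  rewrite mulr_sumr; apply: eq_bigr => k _.
  by rewrite intrM hu intrB -!pmulrn mulrA [_ * w 0 k]mulrC.
pose up k := if 0 <= u k then `|u k|%N else 0%N.
pose um k := if 0 <= u k then 0%N else `|u k|%N.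
have hsplit k : u k = (up k)%:Z - (um k)%:Z by rewrite /up /um; case: ifP => h; lia.
pose dn := `|d|%N.
have dn0 : (0 < dn)%N by rewrite /dn; lia.
have eqn l : (\sum_k up k * B k l + \sum_k um k * A k l =
             dn + (\sum_k up k * A k l + \sum_k um k * B k l))%N.
  have := eqz l.
  rewrite (eq_bigr (fun k => Posz (up k * B k l + um k * A k l) - Posz (up k * A k l + um k * B k l))); last first.
    by move=> k _; rewrite hsplit ring4z !PoszD !PoszM.
  rewrite sumrB -!(big_morph Posz PoszD (erefl _)) !big_split /=.
  rewrite /dn; lia.
pose M := (\sum_l (\sum_k up k * A k l + \sum_k um k * A k l))%N.
have leM l : (\sum_k up k * A k l + \sum_k um k * A k l <= M)%N.
  by rewrite /M (bigD1 l) //=; lia.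
have [z1 h1] : exists z, Delta (seq_of up) (cst M) = Some z.
  by apply: Delta_def => l; rewrite sum_seq_of ffunE; have := leM l; lia.
have [z2 h2] : exists z, Delta (seq_of um) (cst (M + dn)) = Some z.
  by apply: Delta_def => l; rewrite sum_seq_of ffunE; have := leM l; lia.
exists M, (M + dn)%N; split; first lia.
exists (seq_of up), (seq_of um), z1; split => //.
rewrite h2; congr Some; apply/ffunP => l.
have := Delta_eff h1 l; have := Delta_eff h2 l; rewrite !sum_seq_of !ffunE.
have := eqn l.
move: (\sum_k up k * B k l)%N (\sum_k um k * A k l)%N (\sum_k up k * A k l)%N (\sum_k um k * B k l)%N => a b e f.
clearbody M dn; move: (z1 l) (z2 l) => x y; lia.
Qed.

Lemma comb : (forall m p, reach m p -> m = p) <-> (\rank D < \rank (row_mx D c))%N.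
Proof.
rewrite rank_sub; split.
  move=> h; apply/negP => /sub_reach [m [p [nmp r]]]; exact: nmp (h _ _ r).
move=> /negP ns m p r; case: (eqVneq m p) => [//|/eqP nmp].
by case: ns; apply: reach_sub r nmp.
Qed.

End Comb.

Unset Implicit Arguments.

Theorem mainTheorem18 (K : fieldType) (H : hypergraph) (L : algType K)
  (v : 'I_(hv H) -> L) (lam lams : forall k, 'I_(hI H k) -> 'I_(hJ H k) -> L) :
  is_LPA v lam lams ->
  confluent v ->
  (IBN L <-> (\rank (BtAt H) < \rank (row_mx (BtAt H) (const_mx (1%R : rat) : 'cV[rat]_(hv H))))%N).
Proof.
move=> hL hc.
have r1 := (hL.1 : lpa_relations v lam lams); case: r1 => r1 _ _ _ _.
have e1 := one_esum K H L v lam lams hL.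
rewrite -comb IBN_mvn.
have key m p : mvn_equiv (1%:M : 'M[L]_m) (1%:M : 'M[L]_p) <-> reach H m p.
  rewrite /reach -(hc (cst H m) (cst H p)) /V_eq.
  have Cm := cls_const K H L v r1 e1 m.
  have Cp := cls_const K H L v r1 e1 p.
  have Im := diag_idem K H L v r1 m.
  have Ip := diag_idem K H L v r1 p.
  have I1 q : (1%:M : 'M[L]_q) *m 1%:M = 1%:M by rewrite mulmx1.
  split => h.
    apply: (mvn_trans Im Ip _ (mvn_trans (I1 _) Ip h Cp)).
    exact: mvn_sym.
  apply: (mvn_trans (I1 _) (I1 _) Cm).
  apply: (mvn_trans Im (I1 _) h); exact: mvn_sym.
split => h m p.
  by move=> /key; apply: h.
by move=> /key; apply: h.
Qed.
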